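(* Let $x_1, \ldots, x_n$ be Herzog–Kunz generators of $R$ and for $i = 1, \ldots, n-1$ let $T_i = k[[x_1, \ldots, x_i]]$. Then (a) $a_1 = \min\{v(r) : r \in \mathfrak m\setminus\{0\}\}$ is the multiplicity of $R$, and $a_{i+1} = \min\big(V(R) \setminus V(T_i)\big)$ for $i = 1, \ldots, n-1$; (b) for every $l \in \mathbb N$, setting $i_0 = \max\{i : a_i \le l\}$ (with $k[x_1,\ldots,x_{i_0}] := k$ if no $a_i \le l$), every $f \in R$ can be written as $f = p + g$ with $p \in k[x_1, \ldots, x_{i_0}]$ (a polynomial in $x_1,\ldots,x_{i_0}$) and $g \in R$ with $v(g) \ge l+1$.
   Context: Let $k$ be a field and let $(R,\mathfrak m)$ be a complete local noetherian domain of dimension $1$ containing $k$ with $R/\mathfrak m = k$, with normalization $\overline R$ having residue field $k$, so $\overline R = k[[t]]$ and $R \subseteq k[[t]]$ is finite birational. Let $v$ be the $t$-adic valuation on $k((t))$, $v(0)=\infty$. For $A \subseteq k((t))$ let $v(A) = \{v(f): f\in A\setminus\{0\}\}$, and for a subring $T$ let $V(T) = v(T)$ be its value semigroup. The Herzog–Kunz sequence of $R$ is $v(\mathfrak m)\setminus v(\mathfrak m^2)$ listed increasingly as $a_1 < \cdots < a_n$; Herzog–Kunz generators are elements $x_1,\ldots,x_n \in R$ with $v(x_i) = a_i$. For $x_1,\ldots,x_i\in\mathfrak m$, $k[[x_1,\ldots,x_i]]$ is the image of $k[[X_1,\ldots,X_i]]\to k[[t]]$, $X_j\mapsto x_j$.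 *)

(* Defs.v *)
(* Formal power series k[[t]] are modelled as coefficient
   functions nat -> k, with the Cauchy product. *)
From mathcomp Require Import all_boot all_algebra.
Set Implicit Arguments. Unset Strict Implicit. Unset Printing Implicit Defensive.
Import GRing.Theory.
Local Open Scope ring_scope.

Section PowerSeries.
Variable k : fieldType.

Definition ps := nat -> k.
Definition pC (c : k) : ps := fun n => if n is 0%N then c else 0.
Definition padd (f g : ps) : ps := fun n => f n + g n.
Definition popp (f : ps) : ps := fun n => - f n.
Definition pmul (f g : ps) : ps := fun n => \sum_(i < n.+1) f i * g (n - i)%N.
Definition pscale (c : k) (f : ps) : ps := fun n => c * f n.
Definition pexp (f : ps) (m : nat) : ps := iter m (pmul f) (pC 1).
Definition psum d (F : 'I_d -> ps) : ps := fun n => \sum_(j < d) F j n.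

Definition is_val (f : ps) (m : nat) : Prop :=
  f m != 0 /\ forall j, (j < m)%N -> f j = 0.
(* v(g) >= N  (true for g = 0, as v(0) = oo) *)
Definition val_ge (f : ps) (N : nat) : Prop := forall j, (j < N)%N -> f j = 0.
Definition vset (A : ps -> Prop) (s : nat) : Prop := exists2 f, A f & is_val f s.

Definition ksubalg (R : ps -> Prop) : Prop :=
  (forall c, R (pC c)) /\
  (forall f g, R f -> R g -> R (padd f g)) /\
  (forall f, R f -> R (popp f)) /\
  (forall f g, R f -> R g -> R (pmul f g)).

Definition finite_over (R : ps -> Prop) : Prop :=
  exists d (e : 'I_d -> ps), forall h : ps, exists r : 'I_d -> ps,
    (forall j, R (r j)) /\ h = psum (fun j => pmul (r j) (e j)).

(* birational: k[[t]] is contained in Frac(R) (hence Frac R = k((t))) *)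
Definition birational (R : ps -> Prop) : Prop :=
  forall h : ps, exists a b, R a /\ R b /\ (exists j, b j != 0) /\ pmul h b = a.

(* completeness: R is closed in the t-adic topology *)
Definition tclosed (R : ps -> Prop) : Prop :=
  forall f : ps, (forall N, exists2 g, R g & forall j, (j < N)%N -> g j = f j) -> R f.

Definition maxid (R : ps -> Prop) (f : ps) : Prop := R f /\ f 0%N = 0.

Fixpoint mpow (R : ps -> Prop) (n : nat) : ps -> Prop :=
  match n with
  | 0 => R
  | n'.+1 => fun f => exists d (u w : 'I_d -> ps),
      (forall j, mpow R n' (u j) /\ maxid R (w j)) /\
      f = psum (fun j => pmul (u j) (w j))
  end.

(* dim_k (A / B) = d, for k-subspaces B <= A *)
Definition kquotdim (A B : ps -> Prop) (d : nat) : Prop :=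
  exists y : 'I_d -> ps, (forall j, A (y j)) /\
    (forall f, A f -> exists c : 'I_d -> k, exists2 b, B b &
        f = padd (psum (fun j => pscale (c j) (y j))) b) /\
    (forall c : 'I_d -> k, B (psum (fun j => pscale (c j) (y j))) ->
        forall j, c j = 0).

(* multiplicity e(R) of the one-dimensional local ring R: the eventual value
   of the Hilbert function n |-> dim_k (m^n / m^(n+1)) *)
Definition multiplicity (R : ps -> Prop) (e : nat) : Prop :=
  exists N, forall n, (N <= n)%N -> kquotdim (mpow R n) (mpow R n.+1) e.

(* monomial x_1^{al_0} ... x_i^{al_(i-1)} (x is indexed from 1) *)
Definition monom (i : nat) (x : nat -> ps) (al : 'I_i -> nat) : ps :=
  \big[pmul/pC 1]_(j < i) pexp (x j.+1) (al j).

(* image of F in k[[X_1..X_i]] under X_j |-> x_j (requires v(x_j) >= 1):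
   coefficient n only involves monomials with all exponents <= n *)
Definition series_subst (i : nat) (x : nat -> ps)
    (F : {ffun 'I_i -> nat} -> k) : ps :=
  fun n => \sum_(al : {ffun 'I_i -> 'I_n.+1})
             F [ffun j => nat_of_ord (al j)] * @monom i x (fun j => nat_of_ord (al j)) n.

Definition pwrseries_in (i : nat) (x : nat -> ps) (f : ps) : Prop :=
  exists F, f = @series_subst i x F.

Definition poly_in (i : nat) (x : nat -> ps) (f : ps) : Prop :=
  exists N (c : {ffun 'I_i -> 'I_N} -> k),
    f = fun m => \sum_(al : {ffun 'I_i -> 'I_N})
                   c al * @monom i x (fun j => nat_of_ord (al j)) m.

Definition hk_seq (R : ps -> Prop) (n : nat) (a : nat -> nat) : Prop :=
  (forall i j, (1 <= i)%N -> (i < j)%N -> (j <= n)%N -> (a i < a j)%N) /\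
  (forall s, (vset (maxid R) s /\ ~ vset (mpow R 2) s) <->
             exists2 i, (1 <= i <= n)%N & a i = s).

End PowerSeries.
Arguments pwrseries_in {k} i x f.
Arguments poly_in {k} i x f.

(* Main.v *)
From HB Require Import structures.
Require Import Defs.
From mathcomp Require Import all_boot all_algebra.
From mathcomp Require Import boolp.
From mathcomp Require Import zify ring lra.
Set Implicit Arguments. Unset Strict Implicit. Unset Printing Implicit Defensive.
Import GRing.Theory.
Local Open Scope ring_scope.

HB.instance Definition _ (k : fieldType) := Choice.on (ps k).

Section Ring.
Variable k : fieldType.
Implicit Types f g h : ps k.

Lemma paddA : associative (@padd k).
Proof. by move=> f g h; apply: funext => m; rewrite /padd addrA. Qed.
Lemma paddC : commutative (@padd k).
Proof. by move=> f g; apply: funext => m; rewrite /padd addrC. Qed.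
Lemma padd0 : left_id (pC 0) (@padd k).
Proof. by move=> f; apply: funext => m; rewrite /padd /pC; case: m => [|m]; rewrite add0r. Qed.
Lemma paddN : left_inverse (pC 0) (@popp k) (@padd k).
Proof. by move=> f; apply: funext => m; rewrite /padd /popp /pC addNr; case: m. Qed.
HB.instance Definition _ := GRing.isZmodule.Build (ps k) paddA paddC padd0 paddN.

Lemma psE f g m : (f + g) m = f m + g m. Proof. by []. Qed.
Lemma poE f m : (- f) m = - f m. Proof. by []. Qed.
Lemma p0E m : (0 : ps k) m = 0. Proof. by case: m. Qed.
Lemma pBE f g m : (f - g) m = f m - g m. Proof. by []. Qed.

Definition trp (N : nat) f : {poly k} := \poly_(i < N.+1) f i.
Lemma pmul_trp f g m N : (m <= N)%N -> pmul f g m = (trp N f * trp N g)`_m.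
Proof.
move=> le; rewrite coefM /pmul; apply: eq_bigr => i _.
rewrite !coef_poly !ltnS (leq_trans (leq_ord i)) //.
by rewrite (leq_trans (leq_subr _ _)).
Qed.
Lemma coefM_ext (p q p' q' : {poly k}) m :
  (forall j, (j <= m)%N -> p`_j = p'`_j /\ q`_j = q'`_j) -> (p * q)`_m = (p' * q')`_m.
Proof.
move=> H; rewrite !coefM; apply: eq_bigr => i _.
have [->] := H i (leq_ord i); have [_ ->] // := H (m - i)%N (leq_subr _ _).
Qed.

Lemma trp_pmul f g N j : (j <= N)%N -> (trp N (pmul f g))`_j = (trp N f * trp N g)`_j.
Proof. by move=> le; rewrite coef_poly ltnS le (pmul_trp _ _ le). Qed.
Lemma trpE N f j : (j <= N)%N -> (trp N f)`_j = f j.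
Proof. by move=> le; rewrite coef_poly ltnS le. Qed.

Lemma pmulA : associative (@pmul k).
Proof.
move=> f g h; apply: funext => m.
rewrite (pmul_trp _ _ (leqnn m)) [pmul (pmul f g) h m](pmul_trp _ _ (leqnn m)).
transitivity ((trp m f * trp m g * trp m h)`_m); last first.
  by apply: coefM_ext => j le; rewrite trp_pmul ?(leq_trans le).
rewrite -mulrA; apply: coefM_ext => j le; rewrite trp_pmul ?(leq_trans le) //.
Qed.
Lemma pmulC : commutative (@pmul k).
Proof.
move=> f g; apply: funext => m.
by rewrite !(pmul_trp _ _ (leqnn m)) mulrC.
Qed.
Lemma pmul1 : left_id (pC 1) (@pmul k).
Proof.
move=> f; apply: funext => m.
rewrite (pmul_trp _ _ (leqnn m)); rewrite (_ : trp m (pC 1) = 1) ?mul1r ?trpE //.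
apply/polyP => j; rewrite coef_poly coefC /pC; case: j => //= j; by case: ifP.
Qed.
Lemma pmulDl : left_distributive (@pmul k) (@padd k).
Proof.
move=> f g h; apply: funext => m; rewrite /pmul /padd -big_split /=.
by apply: eq_bigr => i _; rewrite mulrDl.
Qed.
Lemma p10 : pC 1 != pC 0 :> ps k.
Proof. apply/eqP => /(congr1 (fun f => f 0%N)) /= /eqP; by rewrite oner_eq0. Qed.
HB.instance Definition _ := GRing.Zmodule_isComNzRing.Build (ps k) pmulA pmulC pmul1 pmulDl p10.

Lemma pmE f g m : (f * g) m = \sum_(i < m.+1) f i * g (m - i)%N. Proof. by []. Qed.
End Ring.

Section Basic.
Variable k : fieldType.
Implicit Types f g h : ps k.

Lemma pCE c m : @pC k c m = if m is 0 then c else 0. Proof. by []. Qed.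
Lemma p1E : (1 : ps k) = pC 1. Proof. by []. Qed.
Lemma p1E' m : (1 : ps k) m = if m is 0 then 1 else 0. Proof. by []. Qed.
Lemma pCM c f m : (pC c * f) m = c * f m.
Proof.
rewrite pmE big_ord_recl /= subn0 big1 ?addr0 // => i _; by rewrite mul0r.
Qed.
Lemma pMC c f m : (f * pC c) m = f m * c.
Proof. by rewrite mulrC pCM mulrC. Qed.
Lemma pCD a b : pC (a + b) = pC a + pC b :> ps k.
Proof. by apply: funext => -[|m] /=; rewrite ?psE /= ?addr0. Qed.
Lemma pCN a : pC (- a) = - pC a :> ps k.
Proof. by apply: funext => -[|m] /=; rewrite ?poE /= ?oppr0. Qed.
Lemma pC0 : pC 0 = 0 :> ps k. Proof. by []. Qed.
Lemma pCMul a b : pC (a * b) = pC a * pC b :> ps k.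
Proof. by apply: funext => m; rewrite pCM; case: m => [|m] /=; rewrite ?mulr0. Qed.
Lemma sumE I (r : seq I) (P : pred I) (F : I -> ps k) m :
  (\sum_(i <- r | P i) F i) m = \sum_(i <- r | P i) F i m.
Proof. by apply: (big_morph (fun f : ps k => f m)) => // ; case: m. Qed.
Lemma pscaleE c f : pscale c f = pC c * f.
Proof. by apply: funext => m; rewrite pCM. Qed.
Lemma psumE d (F : 'I_d -> ps k) : psum F = \sum_(j < d) F j.
Proof. by apply: funext => m; rewrite sumE. Qed.
Lemma paddE f g : padd f g = f + g. Proof. by []. Qed.
Lemma pmulE f g : pmul f g = f * g. Proof. by []. Qed.
Lemma poppE f : popp f = - f. Proof. by []. Qed.
Lemma pexpE f m : pexp f m = f ^+ m.
Proof. by elim: m => // m IH; rewrite exprS /pexp /= -/(pexp f m) IH. Qed.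
Lemma monomE i (x : nat -> ps k) al : @monom k i x al = \prod_(j < i) x j.+1 ^+ al j.
Proof. by rewrite /monom; apply: eq_bigr => j _; rewrite pexpE. Qed.
Lemma monom_ext i (x : nat -> ps k) (al be : 'I_i -> nat) : (forall j, al j = be j) -> @monom k i x al = @monom k i x be.
Proof. by move=> H; rewrite /monom; apply: eq_bigr => j _; rewrite H. Qed.

Lemma vge0 N : val_ge (0 : ps k) N. Proof. by move=> j _; rewrite p0E. Qed.
Lemma vgeW f N M : (M <= N)%N -> val_ge f N -> val_ge f M.
Proof. by move=> le H j lt; apply: H (leq_trans lt le). Qed.
Lemma vgeD f g N : val_ge f N -> val_ge g N -> val_ge (f + g) N.
Proof. by move=> H1 H2 j lt; rewrite psE H1 ?H2 ?addr0. Qed.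
Lemma vgeN f N : val_ge f N -> val_ge (- f) N.
Proof. by move=> H j lt; rewrite poE H ?oppr0. Qed.
Lemma vgeB f g N : val_ge f N -> val_ge g N -> val_ge (f - g) N.
Proof. by move=> H1 H2; apply: vgeD => //; apply: vgeN. Qed.
Lemma vge_sum I (r : seq I) (P : pred I) (F : I -> ps k) N :
  (forall i, P i -> val_ge (F i) N) -> val_ge (\sum_(i <- r | P i) F i) N.
Proof. move=> H; apply: (big_ind (fun f => val_ge f N)) => //; first exact: vge0. by move=> f g; apply: vgeD. Qed.
Lemma vgeM f g a b : val_ge f a -> val_ge g b -> val_ge (f * g) (a + b).
Proof.
move=> Hf Hg j lt; rewrite pmE big1 // => i _.
have [li|li] := ltnP i a; first by rewrite Hf ?mul0r.
rewrite Hg ?mulr0 //; have := ltn_ord i; move: lt li; lia.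
Qed.
Lemma vgeMr f g b : val_ge g b -> val_ge (f * g) b.
Proof. by move=> H; apply: (@vgeM f g 0 b) => // j. Qed.
Lemma vgeMl f g b : val_ge f b -> val_ge (f * g) b.
Proof. by move=> H; rewrite mulrC; apply: vgeMr. Qed.
Lemma pM_at f g a b : val_ge f a -> val_ge g b -> (f * g) (a + b)%N = f a * g b.
Proof.
move=> Hf Hg; rewrite pmE (bigD1 (@Ordinal (a + b).+1 a (leq_addr b a))) //.
rewrite [nat_of_ord _]/= addKn big1 /= ?addr0 // => i /eqP ne.
have [li|li] := ltnP i a; first by rewrite Hf ?mul0r.
have ne' : (nat_of_ord i != a) by apply/eqP => E; apply: ne; apply: val_inj.
rewrite Hg ?mulr0 //; have := ltn_ord i; move: li ne'; rewrite neq_ltn; lia.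
Qed.
Lemma is_valM f g a b : is_val f a -> is_val g b -> is_val (f * g) (a + b).
Proof.
move=> [fa Hf] [gb Hg]; split; last exact: vgeM.
by rewrite pM_at // mulf_neq0.
Qed.
Lemma is_val_vge f a : is_val f a -> val_ge f a. Proof. by case. Qed.
Lemma is_val_neq0 f a : is_val f a -> f != 0.
Proof. by move=> [H _]; apply/eqP => E; move: H; rewrite E p0E eqxx. Qed.
Lemma is_val_uniq f a b : is_val f a -> is_val f b -> a = b.
Proof.
move=> [Ha Ha'] [Hb Hb']; have [lt|lt|//] := ltngtP a b.
  by move: Ha; rewrite (Hb' a lt) eqxx.
by move: Hb; rewrite (Ha' b lt) eqxx.
Qed.
Lemma vge_is_val f a N : is_val f a -> val_ge f N -> (N <= a)%N.
Proof. by move=> [H _] G; rewrite leqNgt; apply/negP => lt; move: H; rewrite G ?eqxx. Qed.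
Lemma exists_val f : f != 0 -> exists a, is_val f a.
Proof.
move=> nz; have ex : exists j, f j != 0.
  apply/not_existsP => H; move/eqP: nz; apply; apply: funext => j.
  by rewrite p0E; apply/eqP; apply: contra_notT (H j) => ->.
case: (ex_minnP ex) => j H1 H2; exists j; split => // i lt.
apply/eqP; apply: contraT => H; have := H2 i H; rewrite leqNgt lt //.
Qed.
Lemma val_or f N : val_ge f N -> val_ge f N.+1 \/ is_val f N.
Proof.
move=> H; have [/eqP E|E] := boolP (f N == 0); [left|right; split => //].
by move=> j; rewrite ltnS leq_eqVlt => /orP [/eqP -> //|]; apply: H.
Qed.
Lemma is_valD f g a : is_val f a -> val_ge g a.+1 -> is_val (f + g) a.
Proof.
move=> [H1 H2] H3; split; first by rewrite psE H3 // addr0.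
by move=> j lt; rewrite psE H2 ?H3 ?addr0 // (leq_trans lt).
Qed.
Lemma is_valC c f a : c != 0 -> is_val f a -> is_val (pC c * f) a.
Proof. by move=> nc [H1 H2]; split; [rewrite pCM mulf_neq0|move=> j lt; rewrite pCM H2 ?mulr0]. Qed.
Lemma vgeC c f a : val_ge f a -> val_ge (pC c * f) a.
Proof. by move=> H j lt; rewrite pCM H ?mulr0. Qed.
Lemma is_val_sum d (F : 'I_d -> ps k) j0 s :
  is_val (F j0) s -> (forall j, j != j0 -> val_ge (F j) s.+1) -> is_val (\sum_j F j) s.
Proof.
move=> H1 H2; rewrite (bigD1 j0) //=; apply: is_valD => //.
by apply: vge_sum => j; apply: H2.
Qed.
Lemma cancel_lead f g a : is_val f a -> val_ge g a -> val_ge (g - pC (g a / f a) * f) a.+1.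
Proof.
move=> [H1 H2] H3 j; rewrite ltnS leq_eqVlt => /orP [/eqP ->|lt].
  by rewrite pBE pCM mulfVK // subrr.
by rewrite pBE pCM (H3 j lt) (H2 j lt) mulr0 subrr.
Qed.

Definition tp (e : nat) : ps k := fun m => (m == e)%:R.
Lemma tpM e f m : (tp e * f) m = if (e <= m)%N then f (m - e)%N else 0.
Proof.
rewrite pmE; case: leqP => le.
  rewrite (bigD1 (@Ordinal m.+1 e le)) //= /tp eqxx mul1r big1 ?addr0 // => i /eqP ne.
  rewrite (_ : (nat_of_ord i == e) = false) ?mul0r //; apply/eqP => E; apply: ne; exact: val_inj.
rewrite big1 // => i _; rewrite /tp; case: eqP => [E|]; last by rewrite mul0r.
by have := ltn_ord i; rewrite E ltnS leqNgt le.
Qed.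
Lemma is_val_tp e : is_val (tp e) e.
Proof. by split; [rewrite /tp eqxx oner_eq0|move=> j lt; rewrite /tp (ltn_eqF lt)]. Qed.
Definition shiftp (e : nat) f : ps k := fun m => f (m + e)%N.
Lemma shiftpK e f : val_ge f e -> f = tp e * shiftp e f.
Proof.
move=> H; apply: funext => m; rewrite tpM /shiftp; case: leqP => le; first by rewrite subnK.
by rewrite H.
Qed.
End Basic.

Section Alg.
Variables (k : fieldType) (R : ps k -> Prop).
Hypothesis HR : ksubalg R.
Implicit Types f g h : ps k.

Lemma RC c : R (pC c). Proof. by case: HR. Qed.
Lemma R0 : R 0. Proof. exact: RC. Qed.
Lemma R1 : R 1. Proof. exact: RC. Qed.
Lemma RD f g : R f -> R g -> R (f + g). Proof. by case: HR => _ [H _]; apply: H. Qed.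
Lemma RN f : R f -> R (- f). Proof. by case: HR => _ [_ [H _]]; apply: H. Qed.
Lemma RB f g : R f -> R g -> R (f - g). Proof. by move=> ? ?; apply: RD => //; apply: RN. Qed.
Lemma RM f g : R f -> R g -> R (f * g). Proof. by case: HR => _ [_ [_ H]]; apply: H. Qed.
Lemma R_sum I (r : seq I) (P : pred I) (F : I -> ps k) :
  (forall i, P i -> R (F i)) -> R (\sum_(i <- r | P i) F i).
Proof. by move=> H; apply: big_ind => //; [exact: R0|exact: RD]. Qed.
Lemma R_prod I (r : seq I) (P : pred I) (F : I -> ps k) :
  (forall i, P i -> R (F i)) -> R (\prod_(i <- r | P i) F i).
Proof. by move=> H; apply: big_ind => //; [exact: R1|exact: RM]. Qed.
Lemma RX f m : R f -> R (f ^+ m).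
Proof. by move=> H; elim: m => [|m IH]; [exact: R1|rewrite exprS; apply: RM]. Qed.

Lemma mC f g : maxid R f -> R g -> maxid R (f * g).
Proof. by move=> [H1 H2] H3; split; [apply: RM|rewrite pmE big_ord1 H2 mul0r]. Qed.
Lemma mD f g : maxid R f -> maxid R g -> maxid R (f + g).
Proof. by move=> [H1 H2] [H3 H4]; split; [apply: RD|rewrite psE H2 H4 addr0]. Qed.
Lemma m0 : maxid R 0. Proof. by split; [exact: R0|]. Qed.
Lemma mN f : maxid R f -> maxid R (- f).
Proof. by move=> [H1 H2]; split; [apply: RN|rewrite poE H2 oppr0]. Qed.
Lemma m_sum I (r : seq I) (P : pred I) (F : I -> ps k) :
  (forall i, P i -> maxid R (F i)) -> maxid R (\sum_(i <- r | P i) F i).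
Proof. by move=> H; apply: big_ind => //; [exact: m0|exact: mD]. Qed.

Lemma mpowSE n f : mpow R n.+1 f <-> exists d (u w : 'I_d -> ps k),
   (forall j, mpow R n (u j) /\ maxid R (w j)) /\ f = \sum_j u j * w j.
Proof.
split => [[d [u [w [H ->]]]]|[d [u [w [H ->]]]]]; exists d, u, w; split => //;
  by rewrite psumE.
Qed.

Lemma mpow_R n f : mpow R n f -> R f.
Proof.
elim: n f => // n IH f /mpowSE [d [u [w [H ->]]]].
by apply: R_sum => j _; have [/IH ? [? _]] := H j; apply: RM.
Qed.
Lemma mpow_m n f : mpow R n.+1 f -> maxid R f.
Proof.
move=> /mpowSE [d [u [w [H ->]]]]; apply: m_sum => j _; have [/mpow_R ? ?] := H j.
by rewrite mulrC; apply: mC.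
Qed.
Lemma mpow0 n : mpow R n 0.
Proof.
case: n => [|n]; first exact: R0.
apply/mpowSE; exists 0%N, (fun _ => 0), (fun _ => 0); split; first by case.
by rewrite big_ord0.
Qed.
Lemma mpowD n f g : mpow R n f -> mpow R n g -> mpow R n (f + g).
Proof.
case: n => [|n]; first exact: RD.
move=> /mpowSE [d1 [u1 [w1 [H1 ->]]]] /mpowSE [d2 [u2 [w2 [H2 ->]]]].
apply/mpowSE; exists (d1 + d2)%N.
exists (fun j => match split j with inl j1 => u1 j1 | inr j2 => u2 j2 end).
exists (fun j => match split j with inl j1 => w1 j1 | inr j2 => w2 j2 end).
split; first by move=> j; case: (split j).
rewrite big_split_ord /=; congr (_ + _); apply: eq_bigr => j _.
  by rewrite -[lshift _ _]/(unsplit (inl j)) unsplitK.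
by rewrite -[rshift _ _]/(unsplit (inr j)) unsplitK.
Qed.
Lemma mpow_sum n I (r : seq I) (P : pred I) (F : I -> ps k) :
  (forall i, P i -> mpow R n (F i)) -> mpow R n (\sum_(i <- r | P i) F i).
Proof. by move=> H; apply: big_ind => //; [exact: mpow0|exact: mpowD]. Qed.
Lemma mpow_ideal n f g : mpow R n f -> R g -> mpow R n (f * g).
Proof.
case: n => [|n]; first exact: RM.
move=> /mpowSE [d [u [w [H ->]]]] Rg; rewrite mulr_suml; apply: mpow_sum => j _.
rewrite -mulrA; apply/mpowSE; exists 1%N, (fun _ => u j), (fun _ => w j * g).
split; first by move=> _; have [? ?] := H j; split => //; apply: mC.
by rewrite big_ord1.
Qed.
Lemma mpow_single n u w : mpow R n u -> maxid R w -> mpow R n.+1 (u * w).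
Proof.
move=> H1 H2; apply/mpowSE; exists 1%N, (fun _ => u), (fun _ => w); split => //.
by rewrite big_ord1.
Qed.
Lemma mpowS_sub n f : mpow R n.+1 f -> mpow R n f.
Proof.
move=> /mpowSE [d [u [w [H ->]]]]; apply: mpow_sum => j _; have [? [? _]] := H j.
by apply: mpow_ideal.
Qed.
Lemma mpowN n f : mpow R n f -> mpow R n (- f).
Proof. by move=> H; rewrite -mulrN1; apply: mpow_ideal => //; apply: RN; exact: R1. Qed.
Lemma mpowB n f g : mpow R n f -> mpow R n g -> mpow R n (f - g).
Proof. by move=> ? ?; apply: mpowD => //; apply: mpowN. Qed.
Lemma mpowC n c f : mpow R n f -> mpow R n (pC c * f).
Proof. by move=> H; rewrite mulrC; apply: mpow_ideal => //; exact: RC. Qed.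
Lemma mpow_vge e n f : (forall g, maxid R g -> val_ge g e) -> mpow R n f -> val_ge f (n * e).
Proof.
move=> He; elim: n f => [|n IH] f; first by move=> _ j; rewrite mul0n.
move=> /mpowSE [d [u [w [H ->]]]]; apply: vge_sum => j _; have [/IH ? /He ?] := H j.
by rewrite mulSn addnC; apply: vgeM.
Qed.
Lemma mpow2M f g : maxid R f -> maxid R g -> mpow R 2 (f * g).
Proof.
move=> Hf Hg; apply: mpow_single => //; rewrite -[f]mul1r; apply: mpow_single => //; exact: R1.
Qed.
End Alg.

Section Setting.
Variables (k : fieldType) (R : ps k -> Prop) (n : nat) (a : nat -> nat) (x : nat -> ps k).
Hypothesis HR : ksubalg R.
Hypothesis Hbir : birational R.
Hypothesis Hhk : hk_seq R n a.
Hypothesis Hx : forall i, (1 <= i <= n)%N -> R (x i) /\ is_val (x i) (a i).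
Implicit Types f g h : ps k.

Lemma m_nonzero : exists f, maxid R f /\ f != 0.
Proof.
apply/not_existsP => H.
have Hm f : maxid R f -> f = 0 by move=> Hf; apply/eqP; apply: contra_notT (H f) => nz; split.
have [a0 [b0 [Ra [Rb [[j bj] E]]]]] := Hbir (tp k 1).
have Hc g : R g -> g = pC (g 0%N).
  move=> Rg; apply/eqP; rewrite -subr_eq0; apply/eqP; apply: Hm; split.
    by apply: RB => //; apply: RC.
  by rewrite pBE subrr.
have b00 : b0 0%N != 0.
  by apply/eqP => H0; move: bj; rewrite (Hc _ Rb) H0; case: j => [|j]; rewrite /pC eqxx.
have E1 : (tp k 1 * b0) 1%N = a0 1%N by rewrite -E.
rewrite tpM /= (Hc _ Ra) /= in E1.
by move: b00; rewrite E1 eqxx.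
Qed.

Lemma vset_m_ex : exists s, vset (maxid R) s.
Proof.
have [f [Hf nz]] := m_nonzero; have [s Hs] := exists_val nz; by exists s, f.
Qed.

Lemma min_val : exists e, vset (maxid R) e /\ forall s, vset (maxid R) s -> (e <= s)%N.
Proof.
have [s0 H0] := vset_m_ex.
have ex : exists s, `[< vset (maxid R) s >] by exists s0; apply/asboolP.
case: (ex_minnP ex) => e /asboolP He Hmin; exists e; split => // s Hs.
by apply: Hmin; apply/asboolP.
Qed.

Lemma hk_in i : (1 <= i <= n)%N -> vset (maxid R) (a i) /\ ~ vset (mpow R 2) (a i).
Proof. by move=> Hi; case: Hhk => _ H; apply/H; exists i. Qed.
Lemma hk_incr i j : (1 <= i)%N -> (i < j)%N -> (j <= n)%N -> (a i < a j)%N.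
Proof. by case: Hhk => H _; apply: H. Qed.
Lemma hk_mono i j : (1 <= i)%N -> (i <= j)%N -> (j <= n)%N -> (a i <= a j)%N.
Proof.
move=> H1; rewrite leq_eqVlt => /orP [/eqP -> //|lt] H2.
by apply: ltnW; apply: hk_incr.
Qed.

Lemma vset_pos s : vset (maxid R) s -> (1 <= s)%N.
Proof.
move=> [f [_ H0] [Hs _]]; case: s Hs => // Hs; by move: Hs; rewrite H0 eqxx.
Qed.

Lemma m_vge_of e : (forall s, vset (maxid R) s -> (e <= s)%N) ->
  forall g, maxid R g -> val_ge g e.
Proof.
move=> Hmin g Hg; have [/eqP ->|nz] := boolP (g == 0); first exact: vge0.
have [s Hs] := exists_val nz; have le := Hmin s (ex_intro2 _ _ g Hg Hs).
by apply: vgeW le _; case: Hs.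
Qed.

Lemma partA1 : (1 <= n)%N /\ vset (maxid R) (a 1%N) /\
  (forall s, vset (maxid R) s -> (a 1%N <= s)%N).
Proof.
have [e [He Hmin]] := min_val.
have e1 := vset_pos He.
have Hge := m_vge_of Hmin.
have notm2 : ~ vset (mpow R 2) e.
  move=> [f Hf Hv]; have := vge_is_val Hv (mpow_vge Hge Hf); rewrite mul2n -addnn.
  move: e1; lia.
have [i Hi Ei] : exists2 i, (1 <= i <= n)%N & a i = e by case: Hhk => _ H; apply/H.
have n1 : (1 <= n)%N by case/andP: Hi => H1 H2; apply: leq_trans H2.
have [H1 _] := hk_in (i := 1) (n1 : (1 <= 1 <= n)%N).
have le1 : (a 1%N <= e)%N by rewrite -Ei; case/andP: Hi => H3 H4; apply: hk_mono.
have := Hmin _ H1 => ge1.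
have E : a 1%N = e by apply/eqP; rewrite eqn_leq le1 ge1.
by split => //; rewrite E; split.
Qed.

Lemma x_m i : (1 <= i <= n)%N -> maxid R (x i).
Proof.
move=> Hi; have [Rx [xv _]] := Hx Hi; split => //.
have [H _] := hk_in Hi; have pos := vset_pos H.
by case: (Hx Hi) => _ [_ H2]; apply: H2.
Qed.
End Setting.

Section LF.
Variables (k : fieldType) (x : nat -> ps k).
Implicit Types f g h : ps k.

Definition mon i (b : {ffun 'I_i -> nat}) : ps k := @monom k i x (fun j => b j).
Definition LF (i : nat) f := exists s : seq (k * {ffun 'I_i -> nat}),
  f = \sum_(q <- s) pC q.1 * mon q.2.

Lemma monE i (b : {ffun 'I_i -> nat}) : mon b = \prod_(j < i) x j.+1 ^+ b j.
Proof. by rewrite /mon monomE. Qed.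

Lemma monD i (b c : {ffun 'I_i -> nat}) : mon [ffun j => b j + c j] = mon b * mon c.
Proof. by rewrite !monE -big_split /=; apply: eq_bigr => j _; rewrite ffunE exprD. Qed.
Lemma mon0 i : mon [ffun j : 'I_i => 0%N] = 1.
Proof. by rewrite monE big1 // => j _; rewrite ffunE expr0. Qed.

Lemma LF_C i c : LF i (pC c).
Proof. by exists [:: (c, [ffun _ => 0%N])]; rewrite big_seq1 mon0 mulr1. Qed.
Lemma LF_D i f g : LF i f -> LF i g -> LF i (f + g).
Proof. by move=> [s1 ->] [s2 ->]; exists (s1 ++ s2); rewrite big_cat. Qed.
Lemma LF_M i f g : LF i f -> LF i g -> LF i (f * g).
Proof.
move=> [s1 ->] [s2 ->].
pose T := (k * {ffun 'I_i -> nat})%type.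
exists (map (fun q : T * T => (q.1.1 * q.2.1, [ffun j => q.1.2 j + q.2.2 j])) [seq (q1, q2) | q1 <- s1, q2 <- s2]).
rewrite big_map big_allpairs big_distrl /=; apply: eq_bigr => q1 _.
rewrite big_distrr /=; apply: eq_bigr => q2 _.
by rewrite monD pCMul; ring.
Qed.
Lemma LF_N i f : LF i f -> LF i (- f).
Proof.
move=> [s ->]; exists [seq (- q.1, q.2) | q <- s]; rewrite big_map -sumrN.
by apply: eq_bigr => q _; rewrite pCN mulNr.
Qed.
Lemma LF_B i f g : LF i f -> LF i g -> LF i (f - g).
Proof. by move=> ? ?; apply: LF_D => //; apply: LF_N. Qed.
Lemma LF_0 i : LF i 0. Proof. exact: (LF_C i 0). Qed.
Lemma LF_1 i : LF i 1. Proof. exact: (LF_C i 1). Qed.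
Lemma LF_sum i I (r : seq I) (P : pred I) (F : I -> ps k) :
  (forall j, P j -> LF i (F j)) -> LF i (\sum_(j <- r | P j) F j).
Proof. by move=> H; apply: big_ind => //; [exact: LF_0|exact: LF_D]. Qed.
Lemma LF_x i j : (1 <= j <= i)%N -> LF i (x j).
Proof.
case: j => // j /andP [_ lt].
exists [:: (1, [ffun l : 'I_i => (nat_of_ord l == j)%N : nat])]; rewrite big_seq1 /= mul1r monE.
rewrite (bigD1 (Ordinal lt)) //= ffunE eqxx expr1 big1 ?mulr1 // => l /eqP ne.
rewrite ffunE (_ : (nat_of_ord l == j) = false) ?expr0 //; apply/eqP => E; apply: ne; exact: val_inj.
Qed.
Lemma LF_X i f m : LF i f -> LF i (f ^+ m).
Proof. by move=> H; elim: m => [|m IH]; [exact: LF_1|rewrite exprS; apply: LF_M]. Qed.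

Definition extf i i' (b : {ffun 'I_i -> nat}) : {ffun 'I_i' -> nat} :=
  [ffun j : 'I_i' => if @insub _ (fun m => (m < i)%N) 'I_i (nat_of_ord j) is Some j0 then b j0 else 0%N].
Lemma mon_ext i i' (b : {ffun 'I_i -> nat}) : (i <= i')%N -> mon (extf i' b) = mon b.
Proof.
move=> le; rewrite !monE.
pose G (j : nat) := if @insub _ (fun m => (m < i)%N) 'I_i j is Some j0 then x j.+1 ^+ b j0 else 1.
transitivity (\prod_(j < i') G j).
  apply: eq_bigr => j _; rewrite ffunE /G; by case: insub => // _; rewrite expr0.
transitivity (\prod_(j < i) G j); last first.
  by apply: eq_bigr => j _; rewrite /G valK.
rewrite (big_ord_widen _ G le) [RHS]big_mkcond /=.
apply: eq_bigr => j _; case: ifP => // /negbT lt; rewrite /G.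
by rewrite insubN.
Qed.
Lemma LF_lift i i' f : (i <= i')%N -> LF i f -> LF i' f.
Proof.
move=> le [s ->]; exists [seq (q.1, extf i' q.2) | q <- s]; rewrite big_map.
by apply: eq_bigr => q _; rewrite mon_ext.
Qed.


Definition emb i N (al : {ffun 'I_i -> 'I_N}) : {ffun 'I_i -> nat} := [ffun j => nat_of_ord (al j)].
Lemma emb_inj i N : injective (@emb i N).
Proof.
move=> a1 a2 E; apply/ffunP => j; apply: val_inj.
by have := congr1 (fun F : {ffun 'I_i -> nat} => F j) E; rewrite /emb !ffunE.
Qed.

Lemma collect i (G : finType) (em : G -> {ffun 'I_i -> nat}) (inj : injective em)
   (s : seq (k * {ffun 'I_i -> nat})) (Mv : {ffun 'I_i -> nat} -> k) :
  (forall q, q \in s -> (forall g : G, em g != q.2) -> Mv q.2 = 0) ->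
  \sum_(g : G) (\sum_(q <- s | q.2 == em g) q.1) * Mv (em g) = \sum_(q <- s) q.1 * Mv q.2.
Proof.
move=> H.
transitivity (\sum_(g : G) \sum_(q <- s) (if q.2 == em g then q.1 * Mv q.2 else 0)).
  apply: eq_bigr => g _; rewrite big_mkcond mulr_suml; apply: eq_bigr => q _.
  by case: eqP => [->|_]; rewrite ?mul0r.
rewrite exchange_big /= big_seq [RHS]big_seq; apply: eq_bigr => q qs.
have [/existsP [g /eqP Eg]|nex] := boolP [exists g, em g == q.2].
  rewrite (bigD1 g) //= -Eg eqxx big1 ?addr0 // => g' ne; case: eqP => // E.
  by move: ne; rewrite (inj _ _ E) eqxx.
rewrite big1 => [|g _]; last first.
  by case: eqP => // E; case/negP: nex; apply/existsP; exists g; rewrite E.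
rewrite H ?mulr0 // => g; apply/negP => E; case/negP: nex; apply/existsP; by exists g.
Qed.

Lemma LF_poly i f : LF i f -> poly_in i x f.
Proof.
move=> [s Ef].
pose M := \max_(q <- s) \max_(j < i) q.2 j.
exists M.+1, (fun al => \sum_(q <- s | q.2 == emb al) q.1).
apply: funext => m; rewrite Ef sumE.
have -> : \sum_(q <- s) (pC q.1 * mon q.2) m = \sum_(q <- s) q.1 * mon q.2 m.
  by apply: eq_bigr => q _; rewrite pCM.
rewrite -(@collect i _ _ (@emb_inj i M.+1) s (fun b : {ffun 'I_i -> nat} => mon b m)).
  apply: eq_bigr => al _; congr (_ * _); rewrite /mon; congr (_ _ m).
  by apply: funext => j; rewrite ffunE.
move=> q qs nex; exfalso; apply: (negP (nex [ffun j => inord (q.2 j)])).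
apply/eqP/ffunP => j; rewrite !ffunE inordK // ltnS.
apply: leq_trans (leq_bigmax_seq _ qs isT).
exact: leq_bigmax.
Qed.

Lemma poly_LF i f : poly_in i x f -> LF i f.
Proof.
move=> [N [c ->]]; exists [seq (c al, emb al) | al <- enum {: {ffun 'I_i -> 'I_N}}].
rewrite big_map big_enum /=; apply: funext => m; rewrite sumE; apply: eq_bigr => al _.
rewrite pCM; congr (_ * _); rewrite /mon; congr (_ _ m).
by apply: funext => j; rewrite ffunE.
Qed.

Lemma vge_exp f m : val_ge f 1 -> val_ge (f ^+ m) m.
Proof.
move=> H; elim: m => [|m IH]; first by move=> j.
by rewrite exprS -add1n; apply: vgeM.
Qed.

Lemma not_img i m (b : {ffun 'I_i -> nat}) :
  (forall g : {ffun 'I_i -> 'I_m.+1}, emb g != b) -> exists j, (m < b j)%N.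
Proof.
move=> H; apply/not_existsP => H'; apply: (negP (H [ffun j => inord (b j)])).
apply/eqP/ffunP => j; rewrite !ffunE inordK // ltnS; by rewrite leqNgt; apply/negP => /(H' j).
Qed.

Section Hx1.
Variable i : nat.
Hypothesis Hx1 : forall j, (1 <= j <= i)%N -> val_ge (x j) 1.

Lemma mon_vge (b : {ffun 'I_i -> nat}) j0 : val_ge (mon b) (b j0).
Proof.
rewrite monE (bigD1 j0) //=; apply: vgeMl; apply: vge_exp; apply: Hx1.
by rewrite ltn_ord.
Qed.
Lemma mon_zero m (b : {ffun 'I_i -> nat}) : (exists j, m < b j)%N -> mon b m = 0.
Proof. by move=> [j lt]; apply: (@mon_vge b j m lt). Qed.

Lemma LF_pws f : LF i f -> pwrseries_in i x f.
Proof.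
move=> [s Ef]; exists (fun b => \sum_(q <- s | q.2 == b) q.1).
apply: funext => m; rewrite Ef sumE /series_subst.
have -> : \sum_(q <- s) (pC q.1 * mon q.2) m = \sum_(q <- s) q.1 * mon q.2 m.
  by apply: eq_bigr => q _; rewrite pCM.
rewrite -(@collect i _ _ (@emb_inj i m.+1) s (fun b : {ffun 'I_i -> nat} => mon b m)).
  apply: eq_bigr => al _; congr (_ * _); rewrite /mon; congr (_ _ m).
  by apply: funext => j; rewrite ffunE.
by move=> q qs nex; apply: mon_zero; apply: not_img.
Qed.

Lemma trunc_series (F : {ffun 'I_i -> nat} -> k) M :
  exists p, LF i p /\ forall m, (m < M)%N -> p m = series_subst x F m.
Proof.
pose s := [seq (F (emb al), emb al) | al <- enum {: {ffun 'I_i -> 'I_M}}].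
exists (\sum_(q <- s) pC q.1 * mon q.2); split; first by exists s.
move=> m lt; rewrite sumE /series_subst.
have -> : \sum_(q <- s) (pC q.1 * mon q.2) m = \sum_(q <- s) q.1 * mon q.2 m.
  by apply: eq_bigr => q _; rewrite pCM.
rewrite -(@collect i _ _ (@emb_inj i m.+1) s (fun b : {ffun 'I_i -> nat} => mon b m)); last first.
  by move=> q qs nex; apply: mon_zero; apply: not_img.
apply: eq_bigr => g _; congr (_ * _); last first.
  by rewrite /mon; congr (_ _ m); apply: funext => j; rewrite ffunE.
rewrite big_map big_enum_cond /=.
pose g' : {ffun 'I_i -> 'I_M} := [ffun j => widen_ord lt (g j)].
have Eg : emb g' = emb g by apply/ffunP => j; rewrite !ffunE.
rewrite (big_pred1 g') ?Eg //= => al; rewrite /= -Eg.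
by apply/eqP/eqP => [/emb_inj|->].
Qed.
End Hx1.
End LF.

Section Approx.
Variables (k : fieldType) (R : ps k -> Prop) (n : nat) (a : nat -> nat) (x : nat -> ps k).
Hypothesis HR : ksubalg R.
Hypothesis Hbir : birational R.
Hypothesis Hhk : hk_seq R n a.
Hypothesis Hx : forall i, (1 <= i <= n)%N -> R (x i) /\ is_val (x i) (a i).
Implicit Types f g h : ps k.

Lemma LF_R i f : (i <= n)%N -> LF x i f -> R f.
Proof.
move=> le [s ->]; apply: R_sum => // q _; apply: RM => //; first exact: RC.
rewrite monE; apply: R_prod => // j _; apply: RX => //.
by case: (Hx (i := j.+1) _) => //; rewrite ltnS (leq_trans _ le) ?ltn_ord.
Qed.

Definition Imax (l : nat) := (\max_(1 <= i < n.+1 | (a i <= l)%N) i)%N.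
Lemma I_le_n l : (Imax l <= n)%N.
Proof. by apply/bigmax_leqP_seq => i; rewrite mem_index_iota => /andP [_]. Qed.
Lemma I_ge l j : (1 <= j <= n)%N -> (a j <= l)%N -> (j <= Imax l)%N.
Proof.
move=> Hj le; apply: (leq_bigmax_seq (F := id)) => //.
by rewrite mem_index_iota ltnS.
Qed.
Lemma I_le l i : (forall j, (1 <= j <= n)%N -> (a j <= l)%N -> (j <= i)%N) -> (Imax l <= i)%N.
Proof.
by move=> H; apply/bigmax_leqP_seq => j; rewrite mem_index_iota ltnS => Hj le; apply: H.
Qed.
Lemma I_mono l l' : (l' <= l)%N -> (Imax l' <= Imax l)%N.
Proof. move=> le; apply: I_le => j Hj le'; apply: I_ge => //; exact: leq_trans le. Qed.

Lemma x_LF l j : (1 <= j <= n)%N -> (a j <= l)%N -> LF x (Imax l) (x j).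
Proof. by move=> Hj le; apply: LF_x; rewrite (I_ge Hj le) andbT; case/andP: Hj. Qed.

Lemma approx_all : forall l f, R f -> exists p, LF x (Imax l) p /\ val_ge (f - p) l.+1.
Proof.
have [n1 [He Hmin]] := partA1 HR Hbir Hhk.
move: He Hmin; move: (a 1%N) => e He Hmin.
have e1 : (1 <= e)%N := vset_pos He.
have Hge := m_vge_of Hmin.
have main : forall L l, (l <= L)%N -> forall f, R f -> exists p, LF x (Imax l) p /\ val_ge (f - p) l.+1.
  elim=> [|L IHL] l.
    rewrite leqn0 => /eqP -> f Rf; exists (pC (f 0%N)); split; first exact: LF_C.
    by move=> j; rewrite ltnS leqn0 => /eqP ->; rewrite pBE subrr.
  rewrite leq_eqVlt => /orP [/eqP El|]; last by rewrite ltnS; apply: IHL.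
  have IH : forall l', (l' < l)%N -> forall f, R f -> exists p, LF x (Imax l') p /\ val_ge (f - p) l'.+1.
    by move=> l' lt; apply: IHL; rewrite -ltnS -El.
  have Rp p : LF x (Imax l) p -> R p by apply: LF_R; exact: I_le_n.
  pose Ap g := exists q, LF x (Imax l) q /\ val_ge (g - q) l.+1.
  have ApD g1 g2 : Ap g1 -> Ap g2 -> Ap (g1 + g2).
    move=> [q1 [L1 V1]] [q2 [L2 V2]]; exists (q1 + q2); split; first exact: LF_D.
    by rewrite (_ : _ - _ = (g1 - q1) + (g2 - q2)); [apply: vgeD|ring].
  have Ap0 : Ap 0 by exists 0; split; [exact: LF_0|rewrite subrr; exact: vge0].
  have Apm2 N h : (N <= l)%N -> mpow R 2 h -> is_val h N -> Ap h.
    move=> Nl Hh hv.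
    have le2 : (2 * e <= N)%N := vge_is_val hv (mpow_vge Hge Hh).
    have lel : (2 * e <= l)%N := leq_trans le2 Nl.
    have ltl : (l - e < l)%N by move: lel e1; lia.
    move/mpowSE: Hh => [d [u [w [Huw ->]]]].
    apply: (big_ind Ap Ap0 ApD) => j _.
    have [Hu1 Hw] := Huw j; have Hu := mpow_m HR Hu1.
    have [P [LP VP]] := IH _ ltl (u j) (proj1 Hu).
    have [Q [LQ VQ]] := IH _ ltl (w j) (proj1 Hw).
    exists (P * Q); split.
      by apply: LF_M; apply: LF_lift LP || apply: LF_lift LQ; apply: I_mono; apply: ltnW.
    rewrite (_ : _ - _ = (u j - P) * w j + P * (w j - Q)); last by ring.
    have ee : (l - e).+1 + e = l.+1 by move: lel e1; lia.
    apply: vgeD; first by rewrite -ee; apply: vgeM => //; apply: Hge.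
    have VP' : val_ge P e.
      rewrite (_ : P = u j - (u j - P)); last by ring.
      by apply: vgeB; [apply: Hge|apply: vgeW VP; move: lel; lia].
    by apply: (vgeW (N := (e + (l - e).+1)%N)); [move: lel; lia|apply: vgeM].
  have claim : forall N, (N <= l.+1)%N -> forall f, R f -> exists p, LF x (Imax l) p /\ val_ge (f - p) N.
    elim=> [|N IHN] Nl f Rf; first by exists 0; split; [exact: LF_0|move=> j].
    have [p [Lp Vp]] := IHN (ltnW Nl) f Rf.
    have Rg : R (f - p) by apply: RB => //; apply: Rp.
    have [V1|gv] := val_or Vp; first by exists p.
    case: N IHN Nl Vp gv => [|N] IHN Nl Vp gv.
      exists (p + pC ((f - p) 0%N)); split; first by apply: LF_D => //; apply: LF_C.
      move=> j; rewrite ltnS leqn0 => /eqP ->.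
      by rewrite (_ : f - _ = (f - p) - pC ((f - p) 0%N)) ?pBE ?subrr //; ring.
    have gm : maxid R (f - p) by split => //; apply: Vp.
    have vN : vset (maxid R) N.+1 by exists (f - p).
    have [H2|H2] := pselect (vset (mpow R 2) N.+1).
      move: H2 => [h Hh hv].
      have [q [Lq Vq]] := Apm2 _ _ (Nl : (N.+1 <= l)%N) Hh hv.
      exists (p + pC ((f - p) N.+1 / h N.+1) * q); split.
        by apply: LF_D => //; apply: LF_M => //; apply: LF_C.
      rewrite (_ : _ - _ = ((f - p) - pC ((f - p) N.+1 / h N.+1) * h) + pC ((f - p) N.+1 / h N.+1) * (h - q)); last by ring.
      apply: vgeD; first exact: cancel_lead.
      by apply: vgeC; apply: vgeW Vq.
    have [j Hj Ej] : exists2 j, (1 <= j <= n)%N & a j = N.+1 by case: Hhk => _ HH; apply/HH.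
    have xv : is_val (x j) N.+1 by rewrite -Ej; case: (Hx Hj).
    exists (p + pC ((f - p) N.+1 / x j N.+1) * x j); split.
      apply: LF_D => //; apply: LF_M; first exact: LF_C.
      by apply: x_LF => //; rewrite Ej.
    rewrite (_ : _ - _ = (f - p) - pC ((f - p) N.+1 / x j N.+1) * x j); last by ring.
    exact: cancel_lead.
  by move=> f Rf; apply: claim.
by move=> l; apply: (main l).
Qed.
End Approx.

Section PartA2.
Variables (k : fieldType) (R : ps k -> Prop) (n : nat) (a : nat -> nat) (x : nat -> ps k).
Hypothesis HR : ksubalg R.
Hypothesis Hbir : birational R.
Hypothesis Hhk : hk_seq R n a.
Hypothesis Hx : forall i, (1 <= i <= n)%N -> R (x i) /\ is_val (x i) (a i).
Implicit Types f g h : ps k.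

Variable i : nat.
Hypothesis Hi : (i <= n)%N.

Definition Lin (d : nat -> k) : ps k := \sum_(j < i) pC (d j) * x j.+1.
Definition Dec p := exists c d h, mpow R 2 h /\ p = pC c + Lin d + h.

Lemma xj_m (j : 'I_i) : maxid R (x j.+1).
Proof. by apply: (x_m Hhk Hx); rewrite /= (leq_trans _ Hi) ?ltn_ord. Qed.
Lemma Lin_m d : maxid R (Lin d).
Proof. apply: (@m_sum _ _ HR) => //= j _; rewrite mulrC; apply: (@mC _ _ HR) => //; [exact: xj_m|exact: (@RC _ _ HR)]. Qed.
Lemma LinD d1 d2 : Lin (fun j => d1 j + d2 j) = Lin d1 + Lin d2.
Proof. by rewrite /Lin -big_split; apply: eq_bigr => j _; rewrite pCD mulrDl. Qed.
Lemma LinC c d : Lin (fun j => c * d j) = pC c * Lin d.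
Proof. by rewrite /Lin mulr_sumr; apply: eq_bigr => j _; rewrite pCMul mulrA. Qed.
Lemma Lin0 : Lin (fun _ => 0) = 0.
Proof. by rewrite /Lin big1 // => j _; rewrite pC0 mul0r. Qed.

Lemma DecD p q : Dec p -> Dec q -> Dec (p + q).
Proof.
move=> [c [d [h [H ->]]]] [c' [d' [h' [H' ->]]]].
exists (c + c'), (fun j => d j + d' j), (h + h'); split; first exact: (@mpowD _ _ HR).
by rewrite pCD LinD; ring.
Qed.
Lemma DecM p q : Dec p -> Dec q -> Dec (p * q).
Proof.
move=> [c [d [h [H ->]]]] [c' [d' [h' [H' ->]]]].
exists (c * c'), (fun j => c * d' j + c' * d j).
exists (Lin d * Lin d' + h' * (Lin d + pC c) + h * (pC c' + Lin d' + h')); split.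
  apply: (@mpowD _ _ HR); first apply: (@mpowD _ _ HR).
  - by apply: (@mpow2M _ _ HR) => //; apply: Lin_m.
  - apply: (@mpow_ideal _ _ HR) => //; apply: (@RD _ _ HR); [exact: (proj1 (Lin_m d))|exact: (@RC _ _ HR)].
  - apply: (@mpow_ideal _ _ HR) => //; apply: (@RD _ _ HR); last exact: (@mpow_R _ _ HR _ _ H').
    by apply: (@RD _ _ HR); [exact: (@RC _ _ HR)|exact: (proj1 (Lin_m d'))].
by rewrite LinD !LinC pCMul; ring.
Qed.
Lemma DecC c : Dec (pC c).
Proof. by exists c, (fun _ => 0), 0; split; [exact: (@mpow0 _ _ HR)|rewrite Lin0; ring]. Qed.
Lemma Decx j : (1 <= j <= i)%N -> Dec (x j).
Proof.
case: j => // j /andP [_ lt].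
exists 0, (fun l => (l == j)%:R), 0; split; first exact: (@mpow0 _ _ HR).
rewrite /Lin (bigD1 (Ordinal lt)) //= eqxx big1 ?pC0; first by rewrite mulr1n -p1E mul1r; ring.
move=> l /eqP ne; rewrite (_ : (nat_of_ord l == j) = false) ?pC0 ?mul0r //.
by apply/eqP => E; apply: ne; apply: val_inj.
Qed.
Lemma DecX p m : Dec p -> Dec (p ^+ m).
Proof. by move=> H; elim: m => [|m IH]; [exact: DecC 1|rewrite exprS; apply: DecM]. Qed.
Lemma LF_Dec p : LF x i p -> Dec p.
Proof.
move=> [s ->]; apply: (big_ind Dec) => //; [exact: DecC 0|exact: DecD|] => q _.
apply: DecM; first exact: DecC.
rewrite monE; apply: (big_ind Dec) => //; [exact: DecC 1|exact: DecM|] => j _.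
by apply: DecX; apply: Decx; rewrite /= ltn_ord.
Qed.

Lemma Lin_val d j0 : (j0 < i)%N -> d j0 != 0 -> (forall j, (j < j0)%N -> d j = 0) ->
  is_val (Lin d) (a j0.+1).
Proof.
move=> lt nz Hmin; rewrite /Lin; apply: (is_val_sum (j0 := Ordinal lt)).
  apply: is_valC => //; case: (Hx (i := j0.+1) _) => //; by rewrite /= (leq_trans lt Hi).
move=> j ne; have [dj|dj] := eqVneq (d j) 0.
  by rewrite dj pC0 mul0r; exact: vge0.
apply: vgeC; have ne' : (nat_of_ord j != j0) by apply: contraNneq ne => E; apply/eqP/val_inj.
have gt : (j0 < j)%N by rewrite ltn_neqAle eq_sym ne' /=; rewrite leqNgt; apply/negP => /Hmin /eqP; rewrite (negbTE dj).
have jn : (j.+1 <= n)%N by rewrite (leq_trans _ Hi) ?ltn_ord.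
case: (Hx (i := j.+1) _) => // _ /is_val_vge; apply: vgeW.
by apply: (hk_incr Hhk) => //.
Qed.
End PartA2.

Section PartA2main.
Variables (k : fieldType) (R : ps k -> Prop) (n : nat) (a : nat -> nat) (x : nat -> ps k).
Hypothesis HR : ksubalg R.
Hypothesis Hbir : birational R.
Hypothesis Hhk : hk_seq R n a.
Hypothesis Hx : forall i, (1 <= i <= n)%N -> R (x i) /\ is_val (x i) (a i).
Implicit Types f g h : ps k.

Lemma x_vge1 i j : (i <= n)%N -> (1 <= j <= i)%N -> val_ge (x j) 1.
Proof.
move=> le /andP [j1 ji] l; rewrite ltnS leqn0 => /eqP ->.
by have [] := x_m Hhk Hx (i := j); [rewrite j1 (leq_trans ji le)|].
Qed.

Lemma partA2 i : (1 <= i <= n.-1)%N ->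
     vset R (a i.+1) /\ ~ vset (pwrseries_in i x) (a i.+1) /\
     (forall s, vset R s -> ~ vset (pwrseries_in i x) s -> (a i.+1 <= s)%N).
Proof.
move=> /andP [i1 ile].
have iln : (i < n)%N by move: i1 ile; lia.
have Hi1 : (1 <= i.+1 <= n)%N by rewrite iln.
have [[f [Rf _] fv] notm2] := hk_in Hhk Hi1.
split; first by exists f.
split.
  move=> [f' [F Ef] fv'].
  set s := a i.+1 in fv' notm2.
  have [p [Lp Ep]] := trunc_series (fun j => @x_vge1 i j (ltnW iln)) F s.+1.
  have pv : is_val p s.
    case: fv' => H1 H2; rewrite Ef in H1 H2; split; first by rewrite Ep.
    by move=> j lt; rewrite Ep ?H2 // ltnS ltnW.
  have s1 : (1 <= s)%N by apply: (vset_pos (hk_in Hhk Hi1).1).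
  have [c [d [h [Hh Ep']]]] := LF_Dec HR Hhk Hx (ltnW iln) Lp.
  have c0 : c = 0.
    have := congr1 (fun q : ps k => q 0%N) Ep'; rewrite /= !psE.
    have [_ ->] := Lin_m HR Hhk Hx (ltnW iln) d.
    have [_ ->] := mpow_m HR Hh.
    case: pv => _ H; rewrite H //= => ->; by rewrite addr0 addr0.
  rewrite c0 pC0 add0r in Ep'.
  have [ex|nex] := boolP [exists j : 'I_i, d j != 0].
    have ex' : exists j, (j < i)%N && (d j != 0).
      by case/existsP: ex => j H; exists j; rewrite ltn_ord.
    case: (ex_minnP ex') => j0 /andP [lt nz] Hmin.
    have Lv := Lin_val Hhk Hx (ltnW iln) lt nz
      (fun j (lj : (j < j0)%N) => ltac:(apply/eqP; apply: contraT => H; have := Hmin j; rewrite (ltn_trans lj lt) H => /(_ isT); rewrite leqNgt lj)).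
    have lts : (a j0.+1 < s)%N by apply: (hk_incr Hhk) => //; rewrite ltnS ltnW.
    have hv : is_val h (a j0.+1).
      rewrite (_ : h = pC (-1) * Lin x i d + p); last by rewrite Ep' pCN -p1E; ring.
      apply: is_valD; first (apply: is_valC; last exact: Lv; by rewrite oppr_eq0 oner_eq0).
      by apply: vgeW (is_val_vge pv).
    have Hj0 : (1 <= j0.+1 <= n)%N by rewrite /= (leq_trans lt (ltnW iln)).
    by have [_] := hk_in Hhk Hj0; apply; exists h.
  have L0 : Lin x i d = 0.
    rewrite /Lin big1 // => j _; move: nex; rewrite negb_exists => /forallP /(_ j).
    by rewrite negbK => /eqP ->; rewrite pC0 mul0r.
  by apply: notm2; exists h => //; rewrite -(_ : p = h) // Ep' L0 add0r.
move=> s [g Rg gv] notT; rewrite leqNgt; apply/negP => lts.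
have [p [Lp Vp]] := approx_all HR Hbir Hhk Hx s Rg.
have Ii : (Imax n a s <= i)%N.
  apply: I_le => j Hj le; rewrite leqNgt; apply/negP => lt.
  have := hk_mono Hhk (i := i.+1) (j := j) isT lt (proj2 (andP Hj)).
  by move: le lts; lia.
apply: notT; exists p.
  apply: (LF_pws (fun j => @x_vge1 i j (ltnW iln))).
  exact: LF_lift Lp.
rewrite (_ : p = g + - (g - p)); last by ring.
by apply: is_valD => //; apply: vgeN.
Qed.
End PartA2main.

Section Inv.
Variables (k : fieldType) (u : ps k).
Hypothesis u0 : u 0%N != 0.

Fixpoint invs (m : nat) : seq k :=
  if m is m'.+1 then rcons (invs m') (- (u 0%N)^-1 * \sum_(i < m) u i.+1 * nth 0 (invs m') (m' - i)%N)
  else [:: (u 0%N)^-1].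
Lemma size_invs m : size (invs m) = m.+1.
Proof. by elim: m => //= m IH; rewrite size_rcons IH. Qed.
Definition invw : ps k := fun j => nth 0 (invs j) j.
Lemma invs_stable m j : (j <= m)%N -> nth 0 (invs m) j = invw j.
Proof.
elim: m => [|m IH]; first by rewrite leqn0 => /eqP ->.
rewrite leq_eqVlt => /orP [/eqP -> //|]; rewrite ltnS => le.
by rewrite /= nth_rcons size_invs ltnS le IH.
Qed.
Lemma invwP : u * invw = 1.
Proof.
apply: funext => -[|m].
  by rewrite pmE big_ord1 /invw /= mulfV.
rewrite pmE big_ord_recl subn0 /=.
have -> : invw m.+1 = - (u 0%N)^-1 * \sum_(i < m.+1) u i.+1 * invw (m - i)%N.
  rewrite /invw /= nth_rcons size_invs ltnn eqxx; congr (_ * _); apply: eq_bigr => i _.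
  by rewrite invs_stable ?leq_subr.
rewrite mulrA mulrN mulfV // mulN1r.
rewrite (_ : \sum_(i < m.+1) _ = \sum_(i < m.+1) u i.+1 * invw (m - i)%N) ?addNr //.
Qed.
End Inv.

Section Div.
Variable k : fieldType.
Implicit Types f g h : ps k.
Lemma divide g h v K : is_val g v -> val_ge h (v + K) -> exists q, h = g * q /\ val_ge q K.
Proof.
move=> gv hv.
have Eg := shiftpK (is_val_vge gv).
have Eh : h = tp k v * shiftp v h by apply: shiftpK; apply: vgeW hv; rewrite leq_addr.
have u0 : shiftp v g 0%N != 0 by rewrite /shiftp add0n; case: gv.
exists (shiftp v h * invw (shiftp v g)); split.
  move: (invwP u0); set w := invw _; set u := shiftp v g => W.
  by rewrite Eg -mulrA (mulrCA u) W mulr1 -Eh.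
apply: vgeMl => j lt; rewrite /shiftp; apply: hv; move: lt; lia.
Qed.
End Div.

Section Cond.
Variables (k : fieldType) (R : ps k -> Prop).
Hypothesis HR : ksubalg R.
Hypothesis Hfin : finite_over R.
Hypothesis Hbir : birational R.
Hypothesis Hcl : tclosed R.
Implicit Types f g h : ps k.

Lemma mulf_neq0p f g : f != 0 -> g != 0 -> f * g != 0.
Proof.
move=> /exists_val [a fa] /exists_val [b gb]; exact: is_val_neq0 (is_valM fa gb).
Qed.

Lemma common_den : exists b, R b /\ b != 0 /\ forall h, R (h * b).
Proof.
have [d [E HE]] := Hfin.
have [A HA] := choice (fun j => Hbir (E j)).
have [B HAB'] := choice HA.
exists (\prod_j B j); split; first by apply: R_prod => // j _; case: (HAB' j) => _ [].
split.
  apply: (big_ind (fun f => f != 0)) => //; first exact: oner_neq0.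
    by move=> f g; apply: mulf_neq0p.
  move=> j _; case: (HAB' j) => _ [_ [[l Hl] _]]; apply/eqP => E0.
  by move: Hl; rewrite E0 p0E eqxx.
move=> h; have [r [Hr ->]] := HE h; rewrite psumE mulr_suml.
apply: R_sum => // j _; rewrite pmulE -mulrA (bigD1 j) //= mulrA.
case: (HAB' j) => RA [RB [_ EB]]; rewrite pmulE in EB; rewrite -!mulrA (mulrA (E j)) EB.
apply: RM => //; apply: RM => //; apply: R_prod => // l _; by case: (HAB' l) => _ [].
Qed.

Lemma conductor : exists C, forall h, val_ge h C -> R h.
Proof.
have [b [Rb [bnz Hb]]] := common_den.
have [c bv] := exists_val bnz.
exists c => h hv; apply: Hcl.
have claim : forall N, exists g, R g /\ val_ge g c /\ val_ge (h - g) N.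
  elim=> [|N [g [Rg [gv Vg]]]]; first by exists 0; split; [exact: R0|split; [exact: vge0|move=> j]].
  have [V1|dv] := val_or Vg; first by exists g.
  have cN : (c <= N)%N by apply: vge_is_val dv (vgeB hv gv).
  have zv : is_val (tp k (N - c) * b) N.
    by have := is_valM (is_val_tp k (N - c)) bv; rewrite subnK.
  exists (g + pC ((h - g) N / (tp k (N - c) * b) N) * (tp k (N - c) * b)); split.
    by apply: (@RD _ _ HR) => //; apply: (@RM _ _ HR); [exact: (@RC _ _ HR)|exact: Hb].
  split.
    apply: vgeD => //; apply: vgeC; apply: vgeW (is_val_vge zv); exact: cN.
  rewrite (_ : h - _ = (h - g) - pC ((h - g) N / (tp k (N - c) * b) N) * (tp k (N - c) * b)); last by ring.
  exact: cancel_lead.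
move=> N; have [g [Rg [_ Vg]]] := claim N; exists g => // j lt.
by have := Vg j lt; rewrite pBE => /eqP; rewrite subr_eq0 => /eqP.
Qed.
End Cond.

Lemma ev_const (f : nat -> nat) B : (forall m, (f m <= f m.+1)%N) -> (forall m, (f m <= B)%N) ->
  exists N, forall m, (N <= m)%N -> f m = f N.
Proof.
move=> inc bnd.
have mono p q : (p <= q)%N -> (f p <= f q)%N.
  move=> le; rewrite -(subnK le); elim: (q - p)%N => //= d IH; exact: leq_trans IH (inc _).
have main : forall d N0, (B - f N0 <= d)%N -> exists N, forall m, (N <= m)%N -> f m = f N.
  elim=> [|d IH] N0 H.
    exists N0 => m le; apply/eqP; rewrite eqn_leq (mono _ _ le) andbT.
    by apply: leq_trans (bnd m) _; move: H; lia.
  have [st|nst] := pselect (forall m, (N0 <= m)%N -> f m = f N0); first by exists N0.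
  move/existsNP: nst => [m /not_implyP [le ne]].
  apply: (IH m); have := mono _ _ le; have := bnd m; move: H ne; lia.
exact: (main B 0%N (leq_subr _ _)).
Qed.

Section Mult.
Variables (k : fieldType) (R : ps k -> Prop).
Hypothesis HR : ksubalg R.
Variables (e : nat) (y : ps k).
Hypothesis e1 : (1 <= e)%N.
Hypothesis ym : maxid R y.
Hypothesis yv : is_val y e.
Hypothesis Hge : forall g, maxid R g -> val_ge g e.
Variable C : nat.
Hypothesis HC : forall h, val_ge h C -> R h.
Implicit Types f g h : ps k.

Lemma is_valX f v m : is_val f v -> is_val (f ^+ m) (m * v).
Proof.
move=> fv; elim: m => [|m IH]; first by rewrite expr0 mul0n; split; [rewrite p1E' oner_eq0|case].
by rewrite exprS mulSn; apply: is_valM.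
Qed.

Lemma M4 m h : val_ge h (C + m * e) -> mpow R m h.
Proof.
move=> hv; have [q [-> qv]] := divide (is_valX m yv) (K := C) (h := h) ltac:(by rewrite addnC).
have Rq := HC qv.
elim: m {hv} => [|m IH]; first by rewrite expr0 mul1r.
by rewrite exprSr mulrAC; apply: mpow_single.
Qed.

Definition V m s := vset (mpow R m) s.
Lemma V1 m s : V m s -> (m * e <= s)%N.
Proof. by move=> [f Hf fv]; apply: vge_is_val fv (mpow_vge Hge Hf). Qed.
Lemma V2 m s : (C + m * e <= s)%N -> V m s.
Proof. by move=> le; exists (tp k s); [apply: M4; apply: vgeW (is_val_vge (is_val_tp k s))|apply: is_val_tp]. Qed.
Lemma V3 m s : V m s -> V m.+1 (s + e).
Proof. by move=> [f Hf fv]; exists (f * y); [apply: mpow_single|apply: is_valM]. Qed.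
Lemma V4 m s : V m s -> V m (s + e).
Proof. by move=> [f Hf fv]; exists (f * y); [apply: mpow_ideal => //; case: ym|apply: is_valM]. Qed.
Lemma V4' m s q : V m s -> V m (s + q * e).
Proof.
move=> H; elim: q => [|q IH]; first by rewrite addn0.
have -> : (s + q.+1 * e = (s + q * e) + e)%N by rewrite mulSn; lia.
by apply: V4.
Qed.

Definition W m : {set 'I_C} := [set j : 'I_C | `[< V m (j + m * e) >] ].
Lemma W_sub m : W m \subset W m.+1.
Proof.
apply/subsetP => j; rewrite !inE => /asboolP H; apply/asboolP.
have -> : (j + m.+1 * e = (j + m * e) + e)%N by rewrite mulSn; lia.
by apply: V3.
Qed.
Lemma W_stab : exists N, forall m, (N <= m)%N -> W m = W m.+1.
Proof.
have [N HN] := ev_const (f := fun m => #|W m|) (B := C) (fun m => subset_leq_card (W_sub m))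
  (fun m => leq_trans (max_card _) (eq_leq (card_ord C))).
exists N => m le; apply/eqP; rewrite eqEcard W_sub /= (HN _ le) HN //; exact: leqW.
Qed.

Section Fixed.
Variable N : nat.
Hypothesis HN : forall m, (N <= m)%N -> W m = W m.+1.
Variable m : nat.
Hypothesis Nm : (N <= m)%N.

Lemma Vstep s : V m.+1 s -> (e <= s)%N /\ V m (s - e).
Proof.
move=> Hs; have le1 := V1 Hs; rewrite mulSn in le1.
split; first by move: le1; lia.
have [jC|jC] := ltnP (s - (e + m * e)) C.
  have : Ordinal jC \in W m.+1 by rewrite inE /=; apply/asboolP; rewrite mulSn subnK.
  rewrite -(HN Nm) inE /= => /asboolP.
  by have -> : (s - (e + m * e) + m * e = s - e)%N by move: le1; lia.
by apply: V2; move: jC le1; lia.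
Qed.

Lemma Ex (r : 'I_e) : exists j, V m (m * e + r + j * e) /\ forall j', V m (m * e + r + j' * e) -> (j <= j')%N.
Proof.
have ex : exists j, `[< V m (m * e + r + j * e) >].
  exists C; apply/asboolP; apply: V2; have := leq_pmulr C e1; lia.
case: (ex_minnP ex) => j /asboolP H1 H2; exists j; split => // j' H; apply: H2; exact/asboolP.
Qed.

Definition mr := projT1 (choice Ex).
Lemma mrP (r : 'I_e) : V m (m * e + r + mr r * e) /\ forall j', V m (m * e + r + j' * e) -> (mr r <= j')%N.
Proof. exact: (projT2 (choice Ex) r). Qed.
Definition gg (r : 'I_e) := (m * e + r + mr r * e)%N.

Lemma gg_mod (r : 'I_e) : (gg r %% e = r)%N.
Proof.
rewrite /gg (_ : (m * e + r + mr r * e = (m + mr r) * e + r)%N); last by rewrite mulnDl; lia.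
by rewrite modnMDl modn_small.
Qed.
Lemma gg_inj (r r' : 'I_e) : gg r = gg r' -> r = r'.
Proof. by move=> E; apply: val_inj; rewrite /= -gg_mod E gg_mod. Qed.

Lemma gg_V (r : 'I_e) : V m (gg r). Proof. exact: (mrP r).1. Qed.
Lemma gg_notV (r : 'I_e) : ~ V m.+1 (gg r).
Proof.
move=> /Vstep [le H]; have rl := ltn_ord r.
case E: (mr r) => [|j].
  have := V1 H; move: le; rewrite /gg E mul0n addn0; lia.
have E2 : (m * e + r + j.+1 * e - e = m * e + r + j * e)%N by rewrite mulSn; lia.
rewrite /gg E E2 in H; have := (mrP r).2 j H; by rewrite E ltnn.
Qed.
Lemma gap s : V m s -> ~ V m.+1 s -> exists r : 'I_e, s = gg r.
Proof.
move=> Hs Hn; have le := V1 Hs.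
pose t := (s - m * e)%N.
have rl : (t %% e < e)%N by rewrite ltn_pmod.
exists (Ordinal rl).
have Es : s = (m * e + Ordinal rl + t %/ e * e)%N.
  have dt := divn_eq t e; rewrite /=; move: le dt; rewrite /t; lia.
have Hs' := Hs; rewrite Es in Hs'; have H1 := (mrP (Ordinal rl)).2 _ Hs'.
rewrite /gg Es; congr (_ + _ * _)%N; apply/eqP; rewrite eqn_leq H1 andbT.
rewrite leqNgt; apply/negP => lt; apply: Hn.
have := V4' (t %/ e - (mr (Ordinal rl)).+1) (V3 (mrP (Ordinal rl)).1).
have -> : (m * e + Ordinal rl + mr (Ordinal rl) * e + e + (t %/ e - (mr (Ordinal rl)).+1) * e = s)%N.
  have hq : ((mr (Ordinal rl)).+1 * e <= t %/ e * e)%N := leq_mul lt (leqnn e).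
  by rewrite [in RHS]Es mulnBl; move: hq; rewrite !mulSn; lia.
by [].
Qed.

Lemma Yex (r : 'I_e) : exists f, mpow R m f /\ is_val f (gg r).
Proof. by have [f H1 H2] := gg_V r; exists f. Qed.
Definition Y := projT1 (choice Yex).
Lemma YP r : mpow R m (Y r) /\ is_val (Y r) (gg r).
Proof. exact: (projT2 (choice Yex) r). Qed.

Lemma kq : kquotdim (mpow R m) (mpow R m.+1) e.
Proof.
have psE' (c : 'I_e -> k) : psum (fun j => pscale (c j) (Y j)) = \sum_j pC (c j) * Y j.
  by rewrite psumE; apply: eq_bigr => j _; rewrite pscaleE.
have MS (c : 'I_e -> k) : mpow R m (\sum_j pC (c j) * Y j).
  by apply: mpow_sum => // j _; apply: mpowC => //; case: (YP j).
exists Y; split; first by move=> j; case: (YP j).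
split.
  move=> f Hf.
  have claim : forall K, exists c : 'I_e -> k, exists b, mpow R m.+1 b /\
      val_ge (f - \sum_j pC (c j) * Y j - b) K.
    elim=> [|K [c [b [Hb Vb]]]].
      by exists (fun _ => 0), 0; split; [apply: mpow0|move=> j].
    set rho := f - _ - b in Vb.
    have Mrho : mpow R m rho.
      by apply: mpowB => //; [apply: mpowB|apply: mpowS_sub].
    have [V1'|rv] := val_or Vb; first by exists c, b.
    have VK : V m K by exists rho.
    have [H2|H2] := pselect (V m.+1 K).
      move: H2 => [z Hz zv].
      exists c, (b + pC (rho K / z K) * z); split; first by apply: mpowD => //; apply: mpowC.
      rewrite (_ : _ - _ = rho - pC (rho K / z K) * z); first exact: cancel_lead.
      by rewrite /rho; ring.
    have [r Er] := gap VK H2.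
    have Yv : is_val (Y r) K by rewrite Er; case: (YP r).
    exists (fun r' => c r' + (if r' == r then rho K / Y r K else 0)), b; split => //.
    have -> : \sum_j pC (c j + (if j == r then rho K / Y r K else 0)) * Y j =
              \sum_j pC (c j) * Y j + pC (rho K / Y r K) * Y r.
      under eq_bigr do rewrite pCD mulrDl.
      rewrite big_split /=; congr (_ + _).
      rewrite (bigD1 r) //= eqxx big1 ?addr0 // => j /negbTE ->; by rewrite pC0 mul0r.
    rewrite (_ : _ - _ = rho - pC (rho K / Y r K) * Y r); first exact: cancel_lead.
    by rewrite /rho; ring.
  have [c [b [Hb Vb]]] := claim (C + m.+1 * e)%N.
  exists c; exists (b + (f - \sum_j pC (c j) * Y j - b)).
    by apply: mpowD => //; apply: M4.
  by rewrite psE' paddE; ring.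
move=> c; rewrite psE' => Hc j; apply/eqP; apply: contraT => nz.
have ex : exists v, [exists r, (c r != 0) && (gg r == v)].
  by exists (gg j); apply/existsP; exists j; rewrite nz eqxx.
case: (ex_minnP ex) => v0 /existsP [r0 /andP [c0 /eqP E0]] Hmin.
suff : False by []. apply: (gg_notV (r := r0)); rewrite E0; exists (\sum_j pC (c j) * Y j) => //.
apply: (is_val_sum (j0 := r0)); first by apply: is_valC => //; rewrite -E0; case: (YP r0).
move=> r ne; have [cr|cr] := eqVneq (c r) 0.
  by rewrite cr pC0 mul0r; exact: vge0.
apply: vgeC; apply: vgeW (is_val_vge (YP r).2).
have le : (v0 <= gg r)%N by apply: Hmin; apply/existsP; exists r; rewrite cr eqxx.
rewrite ltn_neqAle le andbT; apply: contraNneq ne => E.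
by apply/eqP; apply: gg_inj; rewrite E0 E.
Qed.
End Fixed.
End Mult.

Theorem mainTheorem4 (k : fieldType) (R : ps k -> Prop) (n : nat)
    (a : nat -> nat) (x : nat -> ps k) :
  ksubalg R -> finite_over R -> birational R -> tclosed R ->
  hk_seq R n a ->
  (forall i, (1 <= i <= n)%N -> R (x i) /\ is_val (x i) (a i)) ->
  (* (a) *)
  ((vset (maxid R) (a 1%N) /\
      (forall s, vset (maxid R) s -> (a 1%N <= s)%N)) /\
    multiplicity R (a 1%N)) /\
  (forall i, (1 <= i <= n.-1)%N ->
     vset R (a i.+1) /\ ~ vset (pwrseries_in i x) (a i.+1) /\
     (forall s, vset R s -> ~ vset (pwrseries_in i x) s -> (a i.+1 <= s)%N)) /\
  (* (b) *)
  (forall (l : nat) (f : ps k), R f ->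
     exists p g, poly_in (\max_(1 <= i < n.+1 | (a i <= l)%N) i) x p /\
       R g /\ f = padd p g /\ val_ge g l.+1).
Proof.
move=> HR Hfin Hbir Hcl Hhk Hx.
have [n1 [He Hmin]] := partA1 HR Hbir Hhk.
split; [split; first by []|split].
- have e1 := vset_pos He.
  have Hge := m_vge_of Hmin.
  have H11 : (1 <= 1 <= n)%N by rewrite n1.
  have [Rx xv] := Hx 1%N H11.
  have ym := x_m Hhk Hx H11.
  have [C HC] := conductor HR Hfin Hbir Hcl.
  have [N HN] := W_stab e1 ym xv C.
  exists N => m le; exact: (kq HR e1 ym xv Hge HC HN le).
- by move=> i Hi; apply: (partA2 HR Hbir Hhk Hx Hi).
move=> l f Rf.
have [p [Lp Vp]] := approx_all HR Hbir Hhk Hx l Rf.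
exists p, (f - p); split; first exact: LF_poly.
split; first by apply: (@RB _ _ HR) => //; apply: (LF_R HR Hx (I_le_n n a l) Lp).
by split => //; rewrite paddE; ring.
Qed.
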